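(* Let $n,k,t$ be positive integers with $k<n$, $q$ a prime power, and $\mathcal{D}$ the Desarguesian $(t-1)$-spread of $\mathrm{PG}(nt-1,q)$. Let $\Omega$ be an $(nt-kt-2)$-dimensional subspace of $\mathrm{PG}(nt-1,q)$, let $\Gamma$ be a plane skew from $\Omega$, let $\bar{B}$ be a blocking set (with respect to lines) of the plane $\Gamma$, and let $K$ be the cone with vertex $\Omega$ and base $\bar{B}$. Then $\mathcal{B}(K)$ is a blocking set with respect to $(k-1)$-dimensional subspaces of $\mathrm{PG}(n-1,q^t)$.
   Context: Field reduction: each point of $\mathrm{PG}(n-1,q^t)$ corresponds to a $(t-1)$-dimensional subspace of $\mathrm{PG}(nt-1,q)$ (the $1$-dimensional $\mathbb{F}_{q^t}$-subspace viewed over $\mathbb{F}_q$); these form the Desarguesian $(t-1)$-spread $\mathcal{D}$. For $U\subseteq\mathrm{PG}(nt-1,q)$, $\mathcal{B}(U)$ is the set of elements of $\mathcal{D}$ meeting $U$, identified with points of $\mathrm{PG}(n-1,q^t)$. The cone with vertex $\Omega$ and base $\bar{B}$ (in a subspace skew from $\Omega$) is $\bigcup_{P\in\bar B}\langle P,\Omega\rangle$. A blocking set with respect to $j$-spaces is a point set meeting every $j$-dimensional subspace. *)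

(* Defs.v *)
From HB Require Import structures.
From mathcomp Require Import all_boot all_order all_algebra all_field.
Set Implicit Arguments. Unset Strict Implicit. Unset Printing Implicit Defensive.
Import GRing.Theory.
Local Open Scope ring_scope.

(* Field reduction setting: F = F_q (a finite field), L = F_{q^t} given as a
   field extension of F of degree t.  The vector space underlying
   PG(n-1,q^t) is V = L^n = 'rV[L]_n; viewed over F it is the
   nt-dimensional space underlying PG(nt-1,q).
   Subspaces are represented by their underlying sets of vectors (containing 0);
   a projective d-space is a vector subspace of (vector) dimension d+1. *)

Section FieldReduction.
Variables (F : finFieldType) (L : fieldExtType F) (n : nat).
Local Notation V := 'rV[L]_n.

Definition Fspan (vs : seq V) : V -> Prop :=
  fun w => exists c : 'I_(size vs) -> F,
    w = \sum_(i < size vs) ((c i)%:A : L) *: vs`_i.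

Definition Ffree (vs : seq V) : Prop :=
  forall c : 'I_(size vs) -> F,
    \sum_(i < size vs) ((c i)%:A : L) *: vs`_i = 0 -> forall i, c i = 0.

Definition Fsubspace_vdim (S : V -> Prop) (m : nat) : Prop :=
  exists vs : seq V, size vs = m /\ Ffree vs /\ (forall w, S w <-> Fspan vs w).

(* A point set of PG(nt-1,q) is given by a predicate on vectors; the point
   <p>_F belongs to it iff p is nonzero and satisfies the predicate. *)

Definition blocking_set_of_plane (Gamma B : V -> Prop) : Prop :=
  (forall p, B p -> p != 0 -> Gamma p) /\
  (forall l : V -> Prop, Fsubspace_vdim l 2 -> (forall w, l w -> Gamma w) ->
     exists p, p != 0 /\ B p /\ l p).

Definition cone (Omega B : V -> Prop) : V -> Prop :=
  fun w => exists p, p != 0 /\ B p /\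
    exists a : F, exists o, Omega o /\ w = (a%:A : L) *: p + o.

(* B(U): the Desarguesian spread elements (= points <v>_L of PG(n-1,q^t))
   meeting U; the point <v>_L (v != 0) belongs to B(U) iff its F-subspace
   {c v | c in L} contains a nonzero vector of U. *)
Definition inB (U : V -> Prop) (v : V) : Prop :=
  v != 0 /\ exists w, w != 0 /\ U w /\ exists c : L, w = c *: v.

Definition blocking_wrt (P : V -> Prop) (k : nat) : Prop :=
  forall Pi : {vspace V}, \dim Pi = k -> exists v, P v /\ v \in Pi.

End FieldReduction.

(* Main.v *)
Require Import Defs.
From HB Require Import structures.
From mathcomp Require Import all_boot all_order all_algebra all_field.
From mathcomp Require Import zify.
Set Implicit Arguments. Unset Strict Implicit. Unset Printing Implicit Defensive.
Import GRing.Theory.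
Local Open Scope ring_scope.

Section S.
Variables (F : finFieldType) (L : fieldExtType F) (n : nat).
Local Notation V := 'rV[L]_n.
Local Notation W := {ffun 'I_n -> L}.

Definition toW (v : V) : W := [ffun i => v 0 i].
Definition ofW (w : W) : V := \row_i w i.

Lemma toWK : cancel toW ofW.
Proof. by move=> v; apply/rowP=> i; rewrite mxE ffunE; congr (v _ _); apply: ord_inj; case: (0 : 'I_1) => [[]]. Qed.
Lemma ofWK : cancel ofW toW.
Proof. by move=> w; apply/ffunP=> i; rewrite !ffunE mxE. Qed.

Lemma toW_lin (a : F) (u v : V) : toW ((a%:A : L) *: u + v) = a *: toW u + toW v.
Proof. by apply/ffunP=> i; rewrite !ffunE !mxE mulr_algl. Qed.

Lemma toW0 : toW 0 = 0.
Proof. by apply/ffunP=> i; rewrite !ffunE mxE. Qed.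

Lemma toW_sum m (c : 'I_m -> F) (f : 'I_m -> V) :
  toW (\sum_(i < m) ((c i)%:A : L) *: f i) = \sum_(i < m) c i *: toW (f i).
Proof.
elim/big_rec2: _ => [|i y1 y2 _ <-]; first exact: toW0.
by rewrite toW_lin.
Qed.

Lemma dimW (t : nat) : \dim (fullv : {vspace L}) = t -> \dim (fullv : {vspace W}) = (n * t)%N.
Proof. by move=> h; rewrite dimvf /dim /= card_ord -h dimvf. Qed.

Lemma nth_toW (vs : seq V) (i : nat) : (map toW vs)`_i = toW vs`_i.
Proof.
case: (ltnP i (size vs)) => hi; first by rewrite (nth_map 0).
by rewrite !nth_default ?size_map // toW0.
Qed.

Lemma sub_to_vspace (S : V -> Prop) m : Fsubspace_vdim S m ->
  exists U : {vspace W}, \dim U = m /\ forall v, S v <-> toW v \in U.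
Proof.
case=> vs [hs [hfree hspan]].
pose X := map_tuple toW (in_tuple vs).
have hX : free X.
  apply/freeP => c hc; apply: hfree; apply: (can_inj (@toWK)).
  by rewrite toW_sum toW0 -[RHS]hc; apply: eq_bigr => i _; rewrite nth_toW.
exists <<X>>%VS; split.
  by move/eqP: hX => ->; rewrite size_tuple hs.
move=> v; rewrite hspan; split.
  case=> c ->; rewrite toW_sum; apply: memv_suml => i _; apply: memvZ.
  by rewrite -nth_toW; apply: memv_span; apply: mem_nth; rewrite size_map.
move/coord_span => h; exists (fun i => coord X i (toW v)).
apply: (can_inj (@toWK)); rewrite toW_sum {1}h.
by apply: eq_bigr => i _; rewrite nth_toW.
Qed.

Lemma vspace_to_sub (U : {vspace W}) :
  Fsubspace_vdim (fun v => toW v \in U) (\dim U).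
Proof.
exists (map ofW (vbasis U)); split; first by rewrite size_map size_tuple.
have nthX (i : nat) : toW (map ofW (vbasis U))`_i = (vbasis U)`_i.
  case: (ltnP i (size (vbasis U))) => hi; first by rewrite (nth_map 0) // ofWK.
  by rewrite !nth_default ?size_map // toW0.
split.
  move=> c hc i; have := basis_free (vbasisP U).
  move/freeP => hf.
  have e : size (map ofW (vbasis U)) = \dim U by rewrite size_map size_tuple.
  move: c hc i; rewrite e => c hc i; apply: hf.
  have := congr1 (@toW) hc; rewrite toW_sum toW0 => h.
  by rewrite -[RHS]h; apply: eq_bigr => j _; rewrite nthX.
move=> v; split.
  move/coord_vbasis => h.
  have e : size (map ofW (vbasis U)) = \dim U by rewrite size_map size_tuple.
  rewrite /Fspan e; exists (fun i => coord (vbasis U) i (toW v)).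
  apply: (can_inj (@toWK)); rewrite toW_sum {1}h.
  by apply: eq_bigr => i _; rewrite nthX.
case=> c ->; rewrite toW_sum; apply: memv_suml => i _; apply: memvZ.
rewrite nthX; apply: vbasis_mem; apply: mem_nth.
by have := ltn_ord i; move: (i : nat); rewrite size_map.
Qed.

Section PiF.
Variable Pi : {vspace V}.
Local Notation D := {ffun 'I_(\dim Pi) -> L}.
Definition fPi (c : D) : W := toW (\sum_i c i *: (vbasis Pi)`_i).

Lemma fPiE c j : fPi c j = \sum_i c i * (vbasis Pi)`_i 0 j.
Proof. by rewrite /fPi ffunE summxE; apply: eq_bigr => i _; rewrite mxE. Qed.

Lemma fPi_lin : linear fPi.
Proof.
move=> a u v; apply/ffunP => j; rewrite !ffunE !summxE scaler_sumr -big_split /=.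
by apply: eq_bigr => i _; rewrite !mxE !ffunE mulrDl scalerAl.
Qed.
HB.instance Definition _ := GRing.isLinear.Build F D W _ fPi fPi_lin.

Lemma PiF_spec (t : nat) : \dim (fullv : {vspace L}) = t ->
  exists P : {vspace W}, \dim P = (\dim Pi * t)%N /\
    forall w, w \in P -> ofW w \in Pi.
Proof.
move=> ht; exists (limg (linfun fPi)); split.
  have := limg_ker_dim (linfun fPi) fullv.
  have -> : lker (linfun fPi) = 0%VS.
    apply/eqP; rewrite -subv0; apply/subvP => c; rewrite memv_ker lfunE /= memv0.
    move/eqP => hc.
    have h0 : \sum_i c i *: (vbasis Pi)`_i = 0.
      by apply: (can_inj (@toWK)); rewrite toW0.
    have := basis_free (vbasisP Pi); move/freeP/(_ _ h0) => hz.
    by apply/eqP/ffunP => i; rewrite hz ffunE.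
  by rewrite capv0 dimv0 add0n => ->; rewrite dimvf /dim /= card_ord -ht dimvf.
move=> w /memv_imgP [c _ ->]; rewrite lfunE /= /fPi toWK.
by apply: memv_suml => i _; apply: memvZ; apply: vbasis_mem; apply: mem_nth; rewrite size_tuple.
Qed.
End PiF.

Lemma line_in (U : {vspace W}) : (2 <= \dim U)%N ->
  exists l : {vspace W}, \dim l = 2 /\ (l <= U)%VS.
Proof.
move=> h2; exists <<take 2 (vbasis U)>>%VS; split.
  have hf : free (take 2 (vbasis U)).
    apply: (catl_free (Y:=drop 2 (vbasis U))).
    by rewrite cat_take_drop; apply: basis_free (vbasisP U).
  move/eqP: hf => ->; rewrite size_take size_tuple.
  by case: (ltnP 2 (\dim U)) => // h; apply/eqP; rewrite eqn_leq h h2.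
apply/span_subvP => x /mem_take; exact: vbasis_mem.
Qed.
End S.

Theorem lemma4p1 (F : finFieldType) (L : fieldExtType F) (n k t : nat)
  (hn : (0 < n)%N) (hk : (0 < k)%N) (ht : (0 < t)%N) (hkn : (k < n)%N)
  (hL : \dim (fullv : {vspace L}) = t)
  (Omega Gamma Bbar : 'rV[L]_n -> Prop)
  (hOmega : Fsubspace_vdim Omega ((n - k) * t - 1))
  (hGamma : Fsubspace_vdim Gamma 3)
  (hskew : forall w, Omega w -> Gamma w -> w = 0)
  (hB : blocking_set_of_plane Gamma Bbar) :
  blocking_wrt (inB (cone Omega Bbar)) k.
Proof.
move=> Pi hPi.
have [Om [dOm hOm]] := sub_to_vspace hOmega.
have [Ga [dGa hGa]] := sub_to_vspace hGamma.
have [P [dP hP]] := PiF_spec Pi hL; rewrite hPi in dP.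
have dW := dimW n hL.
have skew : (Om :&: Ga = 0)%VS.
  apply/eqP; rewrite -subv0; apply/subvP => w; rewrite memv_cap memv0 => /andP[h1 h2].
  have := hskew (ofW w); rewrite hOm hGa ofWK => /(_ h1 h2) h.
  by rewrite -(ofWK w) h toW0.
have getB : forall l : {vspace _}, \dim l = 2 -> (l <= Ga)%VS ->
    exists p, p != 0 /\ Bbar p /\ toW p \in l.
  move=> l dl sl; have := vspace_to_sub l; rewrite dl => hl.
  case: hB => _ hB2; apply: (hB2 _ hl) => w hw; rewrite hGa; exact: (subvP sl).
have h2G : (2 <= \dim Ga)%N by rewrite dGa.
have [l0 [dl0 sl0]] := line_in h2G.
have [p0 [p0nz [Bp0 _]]] := getB l0 dl0 sl0.
case: (eqVneq (P :&: Om)%VS 0%VS) => hPO; last first.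
  set w := vpick (P :&: Om)%VS.
  have wnz : w != 0 by rewrite vpick0.
  have := memv_pick (P :&: Om)%VS; rewrite -/w memv_cap => /andP[wP wO].
  exists (ofW w); split; last exact: hP.
  split; first by apply: contra wnz => /eqP h; rewrite -(ofWK w) h toW0.
  exists (ofW w); split; first by apply: contra wnz => /eqP h; rewrite -(ofWK w) h toW0.
  split; last by exists 1; rewrite scale1r.
  exists p0; split=> //; split=> //; exists 0, (ofW w); split.
    by rewrite hOm ofWK.
  by rewrite scale0r scale0r add0r.
have dOP : \dim (Om + P)%VS = ((n - k) * t - 1 + k * t)%N.
  by rewrite dimv_disjoint_sum ?dOm ?dP // capvC.
have e1 : ((n - k) * t + k * t)%N = (n * t)%N by rewrite -mulnDl subnK // ltnW.
have e2 : (0 < (n - k) * t)%N by rewrite muln_gt0 subn_gt0 hkn.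
have dM : (2 <= \dim ((Om + P) :&: Ga)%VS)%N.
  have := dimv_sum_cap (Om + P)%VS Ga.
  have := dimvS (subvf ((Om + P) + Ga)%VS); rewrite dW dOP dGa.
  lia.
have [l [dl sl]] := line_in dM.
have [p [pnz [Bp pl]]] := getB l dl (subv_trans sl (capvSr _ _)).
have := subvP (subv_trans sl (capvSl _ _)) _ pl.
case/memv_addP => o oO [m mP hpom].
exists (ofW m); split; last exact: hP.
have mnz : ofW m != 0.
  apply: contra pnz => /eqP hm.
  have m0 : m = 0 by rewrite -(ofWK m) hm toW0.
  rewrite m0 addr0 in hpom.
  have : toW p \in (Om :&: Ga)%VS.
    by rewrite memv_cap hpom oO /= -hpom (subvP (subv_trans sl (capvSr _ _))).
  by rewrite skew memv0 => /eqP h; rewrite -(toWK p) h /ofW; apply/eqP/rowP => j; rewrite !mxE ffunE.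
split=> //; exists (ofW m); split=> //; split; last by exists 1; rewrite scale1r.
exists p; split=> //; split=> //; exists 1, (ofW (- o)); split.
  by rewrite hOm ofWK memvN.
apply: (can_inj (@toWK _ _ n)); rewrite toW_lin !ofWK hpom scale1r (addrC o) addrK. by [].
Qed.
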